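(* Let $t=\alpha^\mu\beta^\nu$ with $\mu\in\mathbb{Z}_{\ge0}^m$ and $\nu\in\{0,\dots,m\}^n$ non-increasing. If $t$ has a sorted syl-representation, then $t$ has a sorted-flushed syl-representation.
   Context: For $M\in\{0,1\}^{m\times n}$: $rs(M)=(\sum_j M_{ij})_i$; $cs(M)=(\sum_i M_{ij})_j$; $ars(M)=(i+\sum_j M_{ij})_{i=1..m}$; $acs(M)=(j+\sum_i M_{ij})_{j=1..n}$. $PC(A,B)$ means $\{acs(A)_1,\dots,acs(A)_n,ars(B)_1,\dots,ars(B)_m\}=\{1,\dots,m+n\}$. A syl-representation of $\alpha^\mu\beta^\nu$ is a pair $(\mathcal{S}_1,\mathcal{S}_2)$ in $\{0,1\}^{m\times n}$ with $rs(\mathcal{S}_1)=\mu$, $cs(\mathcal{S}_2)=\nu$, $PC(\mathcal{S}_1,\mathcal{S}_2)$. $M$ is bottom-left flushed if whenever $M_{ij}=1$, also $M_{i'j'}=1$ for all $i'\ge i$, $j'\le j$. A pair $(A,B)$ is sorted if $acs(A)$ and $ars(B)$ are strictly increasing, flushed if $B$ is bottom-left flushed, sorted-flushed if both. *)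

(* Defs.v *)
From mathcomp Require Import all_boot all_order all_algebra.
Set Implicit Arguments. Unset Strict Implicit. Unset Printing Implicit Defensive.

(* 0/1 matrices are 'M[bool]_(m,n); row/column indices are 0-based ordinals,
   so the paper's index i (1-based) corresponds to the ordinal i-1. *)
Section Defs.
Variables m n : nat.
Implicit Types M A B : 'M[bool]_(m, n).

Definition rs M (i : 'I_m) : nat := \sum_(j < n) (M i j : nat).
Definition cs M (j : 'I_n) : nat := \sum_(i < m) (M i j : nat).
(* augmented sums: paper's i + sum_j M_ij with 1-based i *)
Definition ars M (i : 'I_m) : nat := i.+1 + rs M i.
Definition acs M (j : 'I_n) : nat := j.+1 + cs M j.

Definition PC A B : Prop :=
  [seq acs A j | j <- enum 'I_n] ++ [seq ars B i | i <- enum 'I_m]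
    =i iota 1 (m + n).

Definition syl_rep (mu : 'I_m -> nat) (nu : 'I_n -> nat) A B : Prop :=
  (forall i, rs A i = mu i) /\ (forall j, cs B j = nu j) /\ PC A B.

Definition bottom_left_flushed M : Prop :=
  forall (i i' : 'I_m) (j j' : 'I_n),
    M i j -> (i <= i')%N -> (j' <= j)%N -> M i' j'.

Definition sorted_pair A B : Prop :=
  (forall j j' : 'I_n, (j < j')%N -> (acs A j < acs A j')%N) /\
  (forall i i' : 'I_m, (i < i')%N -> (ars B i < ars B i')%N).

Definition flushed_pair A B : Prop := bottom_left_flushed B.

Definition sorted_flushed_pair A B : Prop := sorted_pair A B /\ flushed_pair A B.
End Defs.

(* Main.v *)
Require Import Defs.
From mathcomp Require Import all_boot all_order all_algebra.
From mathcomp Require Import zify.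
Set Implicit Arguments. Unset Strict Implicit. Unset Printing Implicit Defensive.

Lemma sum_upd1 N (F G : 'I_N -> nat) (a : 'I_N) :
  (forall i, i != a -> G i = F i) -> \sum_(i < N) G i + F a = \sum_(i < N) F i + G a.
Proof.
move=> H; rewrite [\sum_(i < N) G i](bigD1 a) // [\sum_(i < N) F i](bigD1 a) //=.
have E : \sum_(i | i != a) G i = \sum_(i | i != a) F i by apply: eq_bigr => i /H.
rewrite E addnAC [RHS]addnAC [G a + _]addnC; congr (_ + _); exact: eq_big.
Qed.

Lemma sum_upd2 N (F G : 'I_N -> nat) (a b : 'I_N) : a != b ->
  (forall i, i != a -> i != b -> G i = F i) ->
  \sum_(i < N) G i + F a + F b = \sum_(i < N) F i + G a + G b.
Proof.
move=> ab H.
pose K i := if i == a then G a else F i.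
have E1 := @sum_upd1 N F K a (fun i (h : i != a) => ifN _ _ h).
have E2 : \sum_(i < N) G i + K b = \sum_(i < N) K i + G b.
  apply: sum_upd1 => i ib; rewrite /K; case: ifP => [/eqP -> //|/negbT ia].
  by rewrite H.
move: E1 E2; rewrite /K eqxx eq_sym (negbTE ab); lia.
Qed.

Lemma strict_gap N (h : 'I_N -> nat) :
  (forall a b : 'I_N, a < b -> h a < h b) ->
  forall a b : 'I_N, a <= b -> h a + (b - a) <= h b.
Proof.
move=> Hh a.
suff S : forall k (b : 'I_N), nat_of_ord b = a + k -> h a + k <= h b.
  by move=> b Hab; apply: S; lia.
elim=> [|k IH] b Hb.
  have -> : b = a by apply: val_inj; rewrite /= Hb addn0.
  by rewrite addn0.
have Hb' : a + k < N by have := ltn_ord b; lia.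
have H1 := IH (Ordinal Hb') erefl.
have H2 : h (Ordinal Hb') < h b by apply: Hh => /=; lia.
lia.
Qed.

Lemma memL m n (f : 'I_n -> nat) (g : 'I_m -> nat) v :
  reflect ((exists j, v = f j) \/ (exists i, v = g i))
    (v \in [seq f j | j <- enum 'I_n] ++ [seq g i | i <- enum 'I_m]).
Proof.
rewrite mem_cat; apply: (iffP orP).
  by case=> /mapP [k _ ->]; [left|right]; exists k.
case=> [[k ->]|[k ->]]; [left|right]; apply/mapP; exists k => //; by rewrite mem_enum.
Qed.

Lemma sum_bool_le N (F : 'I_N -> bool) : \sum_(i < N) (F i : nat) <= N.
Proof.
apply: leq_trans (_ : \sum_(i < N) 1 <= N); first by apply: leq_sum => i _; case: (F i).
by rewrite sum1_card card_ord.
Qed.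

Lemma sum_bool_lt N (F : 'I_N -> bool) a : ~~ F a -> \sum_(i < N) (F i : nat) < N.
Proof.
move=> Fa.
have E := @sum_upd1 N (fun _ => 1) (fun i => (i != a : nat)) a
  (fun i (h : i != a) => ltac:(by case: eqP h)).
have C : \sum_(i < N) 1 = N by rewrite sum1_card card_ord.
have L : \sum_(i < N) (F i : nat) <= \sum_(i < N) (i != a : nat).
  apply: leq_sum => i _; case: (eqVneq i a) => [->|]; first by rewrite (negbTE Fa).
  by case: (F i).
move: E; rewrite eqxx /= C addn0 => E.
apply: leq_ltn_trans L _; rewrite -[X in _ < X]E addn1 ltnS; exact: leqnn.
Qed.
Lemma flushed_of m n (B : 'M[bool]_(m,n)) (nu : 'I_n -> nat) :
  (forall j j' : 'I_n, j <= j' -> nu j' <= nu j) -> (forall j, cs B j = nu j) ->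
  (forall (j : 'I_n) (x y : 'I_m), x < y -> B x j -> B y j) -> bottom_left_flushed B.
Proof.
move=> Hnu HB Hmono i i' j j' Bij lei lej.
have mono' : forall (k : 'I_n) (x y : 'I_m), x <= y -> B x k -> B y k.
  move=> k x0 y0; rewrite leq_eqVlt => /orP[/eqP E|lt]; last exact: Hmono.
  by have -> : y0 = x0 by apply: val_inj.
have Bi'j := mono' _ _ _ lei Bij.
apply: contraT => nB.
have H1 : cs B j' <= \sum_(x < m) (i' < x : nat).
  apply: leq_sum => x _; case Bx: (B x j') => //=.
  case: (ltnP i' x) => // hx; by rewrite (mono' _ _ _ hx Bx) in nB.
have H2 : \sum_(x < m) (i' <= x : nat) <= cs B j.
  apply: leq_sum => x _; case: (leqP i' x) => hx //=; by rewrite (mono' _ _ _ hx Bi'j).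
have H3 := @sum_upd1 m (fun x : 'I_m => (i' < x : nat)) (fun x => (i' <= x : nat)) i'
  (fun x h => ltac:(move: h; rewrite -(inj_eq val_inj) /= => h; by rewrite ltn_neqAle eq_sym h)).
move: H3; rewrite /= ltnn leqnn addn0 => H3.
have H4 : cs B j' < cs B j.
  apply: leq_ltn_trans H1 _; apply: leq_trans H2; rewrite H3 addn1; exact: leqnn.
have := Hnu _ _ lej; rewrite -!HB; lia.
Qed.
Definition phi m n (B : 'M[bool]_(m,n)) := \sum_(i < m) (rs B i) ^ 2.

Lemma rs_le m n (B : 'M[bool]_(m,n)) i : rs B i <= n.
Proof. exact: (sum_bool_le (fun k => B i k)). Qed.

Lemma phi_bound m n (B : 'M[bool]_(m,n)) : phi B <= m * n ^ 2.
Proof.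
apply: leq_trans (_ : \sum_(i < m) n ^ 2 <= _).
  apply: leq_sum => i _; have := rs_le B i; nia.
by rewrite sum_nat_const card_ord.
Qed.

Definition sw (T : eqType) (a b : T) (i : T) :=
  if i == a then b else if i == b then a else i.

Lemma swK (T : eqType) (a b : T) : involutive (sw a b).
Proof.
move=> i; rewrite /sw.
case: (eqVneq i a) => [->|ia].
  by case: (eqVneq b a) => [->|ba]; rewrite ?eqxx // (negbTE ba) eqxx.
case: (eqVneq i b) => [->|ib]; first by rewrite eqxx.
by rewrite (negbTE ia) (negbTE ib).
Qed.

Lemma sw_f (T : eqType) (f : T -> nat) (a b i : T) : f a = f b -> f (sw a b i) = f i.
Proof.
move=> E; rewrite /sw; case: (eqVneq i a) => [->|_]; first by [].
by case: (eqVneq i b) => [->|_].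
Qed.
Lemma step m n mu nu (A B : 'M[bool]_(m,n)) :
  syl_rep mu nu A B -> sorted_pair A B ->
  forall (j : 'I_n) (x y : 'I_m), x < y -> B x j -> ~~ B y j ->
  exists A2 B2 : 'M[bool]_(m,n),
    syl_rep mu nu A2 B2 /\ sorted_pair A2 B2 /\ phi B < phi B2.
Proof.
move=> [HA [HB HPC]] [sA sB] j x y Hxy Bx By.
have rmono : forall a b : 'I_m, a <= b -> rs B a <= rs B b.
  by move=> a b ab; have := strict_gap sB ab; rewrite /ars; lia.
have fmono := strict_gap sA.
have [p [Pp1 Pp2 Pp3]] : exists p : 'I_m,
    [/\ rs B p = rs B x, p <= x & forall i : 'I_m, i < p -> rs B i < rs B p].
  case: (@arg_minnP _ x (fun i => rs B i == rs B x) (fun i => nat_of_ord i) (eqxx _))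
    => p /eqP Hp Hmin.
  exists p; split => //; first by apply: Hmin.
  move=> i ip; have := rmono _ _ (ltnW ip); rewrite leq_eqVlt => /orP[/eqP E|//].
  have := Hmin i; rewrite E Hp eqxx => /(_ isT); lia.
have [q [Pq1 Pq2 Pq3]] : exists q : 'I_m,
    [/\ rs B q = rs B y, y <= q & forall i : 'I_m, q < i -> rs B q < rs B i].
  case: (@arg_maxnP _ y (fun i => rs B i == rs B y) (fun i => nat_of_ord i) (eqxx _))
    => q /eqP Hq Hmax.
  exists q; split => //; first by apply: Hmax.
  move=> i iq; have := rmono _ _ (ltnW iq); rewrite leq_eqVlt => /orP[/eqP E|//].
  have := Hmax i; rewrite -E Hq eqxx => /(_ isT); lia.
have pq : p < q by lia.
have Bpos : 0 < rs B x by rewrite /rs (bigD1 j) //= Bx.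
have Blt : rs B y < n by exact: (sum_bool_lt By).
have pqr : rs B p <= rs B q by apply: rmono; lia.
pose sg i := sw p x (sw q y i).
have sginj : injective sg by move=> a b /(can_inj (swK p x)) /(can_inj (swK q y)).
have sgp : sg p = x.
  rewrite /sg /sw; have -> : (p == q) = false by apply/negbTE; rewrite -(inj_eq val_inj) /=; lia.
  have -> : (p == y) = false by apply/negbTE; rewrite -(inj_eq val_inj) /=; lia.
  by rewrite eqxx.
have sgq : sg q = y.
  rewrite /sg /sw eqxx.
  have -> : (y == p) = false by apply/negbTE; rewrite -(inj_eq val_inj) /=; lia.
  have -> : (y == x) = false by apply/negbTE; rewrite -(inj_eq val_inj) /=; lia.
  by [].
have sgr : forall i, rs B (sg i) = rs B i.
  by move=> i; rewrite /sg (sw_f (f := rs B)) ?(sw_f (f := rs B)) // Pq1.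
pose B2 : 'M[bool]_(m,n) := (\matrix_(i, k) if (k == j) && (i == p) then false
   else if (k == j) && (i == q) then true else B (sg i) k)%R.
have qp : q != p by rewrite -(inj_eq val_inj) /=; lia.
have rsB2o : forall i, i != p -> i != q -> rs B2 i = rs B i.
  move=> i ip iq; rewrite -(sgr i) /rs; apply: eq_bigr => k _.
  by rewrite mxE (negbTE ip) (negbTE iq) !andbF.
have rsB2p : rs B2 p + 1 = rs B p.
  have := @sum_upd1 n (fun k => (B (sg p) k : nat)) (fun k => (B2 p k : nat)) j
    (fun k h => ltac:(by rewrite /= mxE (negbTE h))).
  rewrite /= mxE eqxx sgp Bx -/(rs B x) -/(rs B2 p) eqxx /= => E; lia.
have rsB2q : rs B2 q = rs B q + 1.
  have := @sum_upd1 n (fun k => (B (sg q) k : nat)) (fun k => (B2 q k : nat)) j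
    (fun k h => ltac:(by rewrite /= mxE (negbTE h))).
  rewrite /= mxE eqxx (negbTE qp) sgq (negbTE By) -/(rs B y) -/(rs B2 q) eqxx /= => E; lia.
have csB1 : forall k, \sum_(i < m) (B (sg i) k : nat) = cs B k.
  by move=> k; rewrite /cs [RHS](reindex_inj sginj).
have csB2 : forall k, cs B2 k = nu k.
  move=> k; rewrite -HB -csB1; case: (eqVneq k j) => [->|kj].
    have := @sum_upd2 m (fun i => (B (sg i) j : nat)) (fun i => (B2 i j : nat)) p q
      (ltac:(by rewrite eq_sym) : p != q)
      (fun i h1 h2 => ltac:(by rewrite /= mxE (negbTE h1) (negbTE h2) !andbF)).
    rewrite /= !mxE eqxx (negbTE qp) sgp sgq Bx (negbTE By) /= => E.
    rewrite /cs; move: E; rewrite !eqxx /= !addn0 !addn1 => /succn_inj.  exact.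
  rewrite /cs; apply: eq_bigr => i _; by rewrite mxE (negbTE kj).
have Luniq : uniq ([seq acs A l | l <- enum 'I_n] ++ [seq ars B i | i <- enum 'I_m]).
  apply: (leq_size_uniq (iota_uniq 1 (m + n))).
    by move=> v; rewrite HPC.
  by rewrite size_cat !size_map size_iota -!enumT !size_enum_ord addnC.
have disj : forall (a : 'I_n) (b : 'I_m), acs A a <> ars B b.
  move=> a b E; move: Luniq; rewrite cat_uniq => /and3P[_ /hasPn H _].
  have := H (ars B b); rewrite map_f ?mem_enum // => /(_ isT).
  by rewrite -E map_f ?mem_enum.
have inL : forall v, 1 <= v <= m + n ->
    v \in [seq acs A l | l <- enum 'I_n] ++ [seq ars B i | i <- enum 'I_m].
  by move=> v hv; rewrite HPC mem_iota; lia.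
have rsn : forall i, rs B i <= n by move=> i; apply: rs_le.
have [j1 Hj1] : exists j1, acs A j1 = p + rs B p.
  have : p + rs B p \in [seq acs A l | l <- enum 'I_n] ++ [seq ars B i | i <- enum 'I_m].
    apply: inL; have := rsn p; have := ltn_ord p; lia.
  case/memL => [[j1 Hj1]|[i Hi]]; first by exists j1.
  exfalso; move: Hi; rewrite /ars; case: (ltnP i p) => ip.
    have := Pp3 _ ip; lia.
  have := rmono _ _ ip; lia.
have [j2 Hj2] : exists j2, acs A j2 = q.+2 + rs B q.
  have : q.+2 + rs B q \in [seq acs A l | l <- enum 'I_n] ++ [seq ars B i | i <- enum 'I_m].
    apply: inL; have := ltn_ord q; lia.
  case/memL => [[j2 Hj2]|[i Hi]]; first by exists j2.
  exfalso; move: Hi; rewrite /ars; case: (ltnP q i) => iq.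
    have := Pq3 _ iq; lia.
  have := rmono _ _ iq; lia.
have j12 : j1 < j2.
  case: (ltngtP j1 j2) => // h.
    have := sA _ _ h; lia.
  have E : j1 = j2 by apply: val_inj.
  move: Hj1; rewrite E Hj2; lia.
have gt1 : forall b : 'I_n, j1 < b -> ars B p < acs A b.
  move=> b hb; have := sA _ _ hb; have := disj b p; rewrite Hj1 /ars; lia.
have lt2 : forall a : 'I_n, a < j2 -> acs A a < ars B q.
  move=> a ha; have := sA _ _ ha; have := disj a q; rewrite Hj2 /ars; lia.
have csgap : cs A j1 < cs A j2.
  have hj1' : j1.+1 < n by have := ltn_ord j2; lia.
  have := gt1 (Ordinal hj1') (ltnSn _).
  have := fmono (Ordinal hj1') j2 j12.
  move: Hj1 Hj2; rewrite /acs /ars /=; lia.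
have [k [Ak2 Ak1]] : exists k, A k j2 /\ ~~ A k j1.
  case: (boolP [exists k, A k j2 && ~~ A k j1]) => [/existsP[k /andP[]]|/existsPn H].
    by move=> *; exists k.
  exfalso; have : cs A j2 <= cs A j1.
    apply: leq_sum => i _; move: (H i); case: (A i j2); case: (A i j1) => //.
  lia.
have j12n : j1 != j2 by rewrite -(inj_eq val_inj) /=; lia.
pose A2 : 'M[bool]_(m,n) := (\matrix_(i, l) if (i == k) && (l == j1) then true
   else if (i == k) && (l == j2) then false else A i l)%R.
have rsA2 : forall i, rs A2 i = mu i.
  move=> i; rewrite -HA; case: (eqVneq i k) => [->|ik].
    have := @sum_upd2 n (fun l => (A k l : nat)) (fun l => (A2 k l : nat)) j1 j2 j12n
      (fun l h1 h2 => ltac:(by rewrite /= mxE (negbTE h1) (negbTE h2) !andbF)).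
    rewrite /= !mxE eqxx (negbTE Ak1) Ak2 /= (negbTE j12n) (eq_sym j2) (negbTE j12n) /=.
    by rewrite -/(rs A k) -/(rs A2 k) !eqxx /= => E; lia.
  by rewrite /rs; apply: eq_bigr => l _; rewrite mxE (negbTE ik).
have csA2o : forall l, l != j1 -> l != j2 -> cs A2 l = cs A l.
  move=> l h1 h2; rewrite /cs; apply: eq_bigr => i _.
  by rewrite mxE (negbTE h1) (negbTE h2) !andbF.
have csA21 : cs A2 j1 = cs A j1 + 1.
  have := @sum_upd1 m (fun i => (A i j1 : nat)) (fun i => (A2 i j1 : nat)) k
      (fun i h => ltac:(by rewrite /= mxE (negbTE h))).
  rewrite /= !mxE eqxx (negbTE Ak1) /= -/(cs A j1) -/(cs A2 j1) !eqxx /= => E; lia.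
have csA22 : cs A2 j2 + 1 = cs A j2.
  have := @sum_upd1 m (fun i => (A i j2 : nat)) (fun i => (A2 i j2 : nat)) k
      (fun i h => ltac:(by rewrite /= mxE (negbTE h))).
  rewrite /= !mxE eqxx Ak2 (eq_sym j2) (negbTE j12n) /= -/(cs A j2) -/(cs A2 j2) !eqxx /= => E; lia.
have acsE : forall l, acs A2 l =
    if l == j1 then ars B p else if l == j2 then ars B q else acs A l.
  move=> l; case: (eqVneq l j1) => [->|h1].
    by move: Hj1; rewrite /acs /ars csA21; lia.
  case: (eqVneq l j2) => [->|h2].
    by move: Hj2; rewrite /acs /ars; lia.
  by rewrite /acs csA2o.
have arsE : forall i, ars B2 i =
    if i == p then ars B p - 1 else if i == q then ars B q + 1 else ars B i.
  move=> i; case: (eqVneq i p) => [->|h1].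
    by rewrite /ars; lia.
  case: (eqVneq i q) => [->|h2].
    by rewrite /ars; lia.
  by rewrite /ars rsB2o.
have spq : ars B p < ars B q by apply: sB.
have sA2 : forall a b : 'I_n, a < b -> acs A2 a < acs A2 b.
  move=> a b ab; rewrite !acsE.
  case: (eqVneq a j1) => [Ea|na].
    rewrite Ea in ab *.
    case: (eqVneq b j1) => [Eb|nb]; first by rewrite Eb ltnn in ab.
    case: (eqVneq b j2) => [Eb|nb2] //; exact: gt1.
  case: (eqVneq a j2) => [Ea|na2].
    rewrite Ea in ab *.
    case: (eqVneq b j1) => [Eb|nb]; first by rewrite Eb in ab; lia.
    case: (eqVneq b j2) => [Eb|nb2]; first by rewrite Eb ltnn in ab.
    have := sA _ _ ab; rewrite Hj2 /ars; lia.
  case: (eqVneq b j1) => [Eb|nb].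
    rewrite Eb in ab; have := sA _ _ ab; rewrite Hj1 /ars; lia.
  case: (eqVneq b j2) => [Eb|nb2]; first by rewrite Eb in ab; exact: lt2.
  exact: sA.
have sB2 : forall a b : 'I_m, a < b -> ars B2 a < ars B2 b.
  move=> a b ab; rewrite !arsE.
  case: (eqVneq a p) => [Ea|na].
    rewrite Ea in ab *.
    case: (eqVneq b p) => [Eb|nb]; first by rewrite Eb ltnn in ab.
    case: (eqVneq b q) => [Eb|nb2]; first by lia.
    have := sB _ _ ab; lia.
  case: (eqVneq a q) => [Ea|na2].
    rewrite Ea in ab *.
    case: (eqVneq b p) => [Eb|nb]; first by rewrite Eb in ab; lia.
    case: (eqVneq b q) => [Eb|nb2]; first by rewrite Eb ltnn in ab.
    have := Pq3 _ ab; rewrite /ars; lia.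
  case: (eqVneq b p) => [Eb|nb].
    rewrite Eb in ab; have := Pp3 _ ab; rewrite /ars; lia.
  case: (eqVneq b q) => [Eb|nb2]; first by rewrite Eb in ab; have := sB _ _ ab; lia.
  exact: sB.
have PC2 : PC A2 B2.
  move=> v; rewrite -HPC; apply/memL/memL.
    case=> [[l ->]|[i ->]].
      rewrite acsE; case: (eqVneq l j1) => _; first by right; exists p.
      case: (eqVneq l j2) => _; first by right; exists q.
      by left; exists l.
    rewrite arsE; case: (eqVneq i p) => _.
      by left; exists j1; rewrite Hj1 /ars; lia.
    case: (eqVneq i q) => _; first by left; exists j2; rewrite Hj2 /ars; lia.
    by right; exists i.
  case=> [[l ->]|[i ->]].
    case: (eqVneq l j1) => [->|h1].
      by right; exists p; rewrite arsE eqxx Hj1 /ars; lia.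
    case: (eqVneq l j2) => [->|h2].
      by right; exists q; rewrite arsE (negbTE qp) eqxx Hj2 /ars; lia.
    by left; exists l; rewrite acsE (negbTE h1) (negbTE h2).
  case: (eqVneq i p) => [->|h1]; first by left; exists j1; rewrite acsE eqxx.
  case: (eqVneq i q) => [->|h2].
    left; exists j2; rewrite acsE ifN_eq ?eqxx // eq_sym; exact: j12n.
  by right; exists i; rewrite arsE (negbTE h1) (negbTE h2).
exists A2, B2; split; first by split => //; split.
split; first by split.
have := @sum_upd2 m (fun i => rs B i ^ 2) (fun i => rs B2 i ^ 2) p q
  (ltac:(by rewrite eq_sym) : p != q)
  (fun i h1 h2 => ltac:(by rewrite /= rsB2o)).
rewrite /= -/(phi B) -/(phi B2) => E.
have := Bpos; rewrite -Pp1 => Bp.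
move: E; rewrite rsB2q -rsB2p; nia.
Qed.

Lemma noviol m n (nu : 'I_n -> nat) (B : 'M[bool]_(m,n)) :
  (forall j j' : 'I_n, j <= j' -> nu j' <= nu j) -> (forall j, cs B j = nu j) ->
  ~~ [exists j : 'I_n, exists x : 'I_m, exists y : 'I_m, (x < y) && B x j && ~~ B y j] ->
  bottom_left_flushed B.
Proof.
move=> Hnu HB /existsPn H; apply: (flushed_of Hnu HB) => j x y hxy bx.
apply: contraT => nb; move/existsPn: (H j) => /(_ x) /existsPn /(_ y).
by rewrite hxy bx nb.
Qed.

Theorem mainTheorem8 (m n : nat) (mu : 'I_m -> nat) (nu : 'I_n -> nat)
  (Hnu_range : forall j : 'I_n, (nu j <= m)%N)
  (Hnu_noninc : forall j j' : 'I_n, (j <= j')%N -> (nu j' <= nu j)%N) :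
  (exists A B : 'M[bool]_(m, n), syl_rep mu nu A B /\ sorted_pair A B) ->
  exists A B : 'M[bool]_(m, n), syl_rep mu nu A B /\ sorted_flushed_pair A B.
Proof.
move=> [A [B [Hrep Hsort]]].
suff S : forall k (A B : 'M[bool]_(m,n)), m * n ^ 2 - phi B <= k ->
    syl_rep mu nu A B -> sorted_pair A B ->
    exists A B : 'M[bool]_(m, n), syl_rep mu nu A B /\ sorted_flushed_pair A B.
  exact: (S (m * n ^ 2) A B (leq_subr _ _)).
elim=> [|k IH] A0 B0 hk hrep hsort;
  case: (boolP [exists j : 'I_n, exists x : 'I_m, exists y : 'I_m, (x < y) && B0 x j && ~~ B0 y j]) => V.
- move: V => /existsP[j /existsP[x /existsP[y /andP[/andP[hxy bx] nby]]]].
  have [A2 [B2 [h1 [h2 h3]]]] := step hrep hsort hxy bx nby.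
  have := phi_bound B2; lia.
- exists A0, B0; split => //; split => //.
  exact: (noviol Hnu_noninc hrep.2.1 V).
- move: V => /existsP[j /existsP[x /existsP[y /andP[/andP[hxy bx] nby]]]].
  have [A2 [B2 [h1 [h2 h3]]]] := step hrep hsort hxy bx nby.
  apply: (IH A2 B2) => //; have := phi_bound B2; lia.
- exists A0, B0; split => //; split => //.
  exact: (noviol Hnu_noninc hrep.2.1 V).
Qed.
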